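(* Let $\langle X, \leq_1, \leq_2\rangle$ be a lattice frame, and let $L_X$ be the Urquhart complex algebra of $X$ (the complete bounded lattice of stable subsets of $X$). Let $X_{L_X}$ be the set of maximal filter–ideal pairs of $L_X$, ordered by $\leq_1$ and $\leq_2$ as in the Urquhart canonical frame. Then $X$ is embeddable into the Urquhart canonical frame $\langle X_{L_X}, \leq_1, \leq_2\rangle$: there is an injective map $k: X \to X_{L_X}$ such that for $i = 1,2$ and all $x,y \in X$, $x \leq_i y$ implies $k(x) \leq_i k(y)$.
   Context: A doubly ordered frame is a structure $\langle X, \leq_1, \leq_2\rangle$ where $\leq_1,\leq_2$ are quasiorders (reflexive and transitive relations) on $X$ such that $x \leq_1 y$ and $x \leq_2 y$ together imply $x = y$. Write $\uparrow_i x = \{y : x \leq_i y\}$. A lattice frame is a doubly ordered frame satisfying: (LF1) each element of $X$ is below a $\leq_1$-maximal element and below a $\leq_2$-maximal element; (LF2) if $x \not\leq_1 y$ then there is $z$ with $y \leq_1 z$ such that for all $w$, $x \leq_1 w$ implies $z \not\leq_2 w$; (LF3) if $x \not\leq_2 y$ then there is $z$ with $y \leq_2 z$ such that for all $w$, $x \leq_2 w$ implies $z \not\leq_1 w$. For $Y \subseteq X$ let $l(Y) = \{x : \uparrow_1 x \cap Y = \emptyset\}$ and $r(Y) = \{x : \uparrow_2 x \cap Y = \emptyset\}$. $Y$ is stable if $Y = l(r(Y))$; $L_X$ is the set of stable sets, with operations $Y \wedge Z = Y \cap Z$ and $Y \vee Z = l(r(Y \cup Z))$, bottom $\emptyset$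 and top $X$; this is a complete bounded lattice (the Urquhart complex algebra of $X$). For a bounded lattice $L$, a filter–ideal pair is $\langle F, I\rangle$ with $F$ a proper filter, $I$ a proper ideal, and $F \cap I = \emptyset$. It is maximal if no proper filter strictly containing $F$ is disjoint from $I$ and no proper ideal strictly containing $I$ is disjoint from $F$. For a maximal pair $x = \langle F, I\rangle$ write $x_1 = F$, $x_2 = I$. The Urquhart canonical frame of $L$ is $\langle X_L, \leq_1, \leq_2\rangle$, where $X_L$ is the set of maximal filter–ideal pairs and $x \leq_i y$ iff $x_i \subseteq y_i$. *)

(* Defs.v *)
From mathcomp Require Import all_boot.
From mathcomp Require Import boolp classical_sets.
Set Implicit Arguments. Unset Strict Implicit. Unset Printing Implicit Defensive.
Local Open Scope classical_set_scope.

Section Frames.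
Variable X : Type.
Variables le1 le2 : X -> X -> Prop.

Definition quasiorder (R : X -> X -> Prop) :=
  (forall x, R x x) /\ (forall x y z, R x y -> R y z -> R x z).

Definition doubly_ordered :=
  [/\ quasiorder le1, quasiorder le2 &
      forall x y, le1 x y -> le2 x y -> x = y].

Definition maximal (R : X -> X -> Prop) (m : X) := forall y, R m y -> R y m.

Definition up (R : X -> X -> Prop) (x : X) : set X := [set y | R x y].

Definition lattice_frame :=
  [/\ doubly_ordered,
      (forall x, (exists m, le1 x m /\ maximal le1 m) /\
                 (exists m, le2 x m /\ maximal le2 m)),
      (forall x y, ~ le1 x y ->
         exists z, le1 y z /\ forall w, le1 x w -> ~ le2 z w) &
      (forall x y, ~ le2 x y ->
         exists z, le2 y z /\ forall w, le2 x w -> ~ le1 z w)].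

Definition lop (Y : set X) : set X := [set x | up le1 x `&` Y = set0].
Definition rop (Y : set X) : set X := [set x | up le2 x `&` Y = set0].

Definition stable (Y : set X) := Y = lop (rop Y).

Record stable_set := StableSet { carrier : set X ; carrierP : stable carrier }.

Definition L_le (Y Z : stable_set) := carrier Y `<=` carrier Z.
Definition is_meet (Y Z W : stable_set) := carrier W = carrier Y `&` carrier Z.
Definition is_join (Y Z W : stable_set) :=
  carrier W = lop (rop (carrier Y `|` carrier Z)).

Definition L_filter (F : set stable_set) :=
  [/\ (exists Y, F Y),
      (forall Y Z, F Y -> L_le Y Z -> F Z) &
      (forall Y Z W, F Y -> F Z -> is_meet Y Z W -> F W)].

Definition L_ideal (I : set stable_set) :=
  [/\ (exists Y, I Y),
      (forall Y Z, I Y -> L_le Z Y -> I Z) &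
      (forall Y Z W, I Y -> I Z -> is_join Y Z W -> I W)].

Definition proper (S : set stable_set) := S <> setT.

Definition fi_pair (F I : set stable_set) :=
  [/\ L_filter F, proper F, L_ideal I, proper I & F `&` I = set0].

Definition maximal_fi_pair (F I : set stable_set) :=
  [/\ fi_pair F I,
      (forall F', L_filter F' -> proper F' -> F `<=` F' -> F' `&` I = set0 ->
          F' = F) &
      (forall I', L_ideal I' -> proper I' -> I `<=` I' -> F `&` I' = set0 ->
          I' = I)].

Record canon_point := CanonPoint {
  cp1 : set stable_set ; cp2 : set stable_set ;
  cpP : maximal_fi_pair cp1 cp2 }.

Definition canon_le1 (x y : canon_point) := cp1 x `<=` cp1 y.
Definition canon_le2 (x y : canon_point) := cp2 x `<=` cp2 y.

End Frames.

(* Main.v *)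
Require Import Defs.
From mathcomp Require Import all_boot.
From mathcomp Require Import boolp classical_sets.
From Stdlib Require Import Classical.
Set Implicit Arguments. Unset Strict Implicit.
Local Open Scope classical_set_scope.

Lemma eq0P (T : Type) (A : set T) : A = set0 <-> forall w, ~ A w.
Proof.
split; first by move=> -> w.
move=> H; rewrite eqEsubset; split => w //; exact: H.
Qed.

Lemma in_lop (X : Type) (R : X -> X -> Prop) (Y : set X) x :
  lop R Y x <-> forall w, R x w -> ~ Y w.
Proof.
rewrite /lop /=; rewrite eq0P; split => H w.
- by move=> h1 h2; apply: (H w).
- by case=> h1 h2; apply: (H w).
Qed.

Lemma in_rop (X : Type) (R : X -> X -> Prop) (Y : set X) x :
  rop R Y x <-> forall w, R x w -> ~ Y w.
Proof.
rewrite /rop /=; rewrite eq0P; split => H w.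
- by move=> h1 h2; apply: (H w).
- by case=> h1 h2; apply: (H w).
Qed.

Definition upc (X : Type) (R : X -> X -> Prop) (A : set X) :=
  forall x y, A x -> R x y -> A y.

Lemma lop_upc (X : Type) (R : X -> X -> Prop) (A : set X) :
  (forall x y z, R x y -> R y z -> R x z) -> upc R (lop R A).
Proof.
move=> tr x y /in_lop H xy; apply/in_lop => w yw; apply: H; exact: tr yw.
Qed.

Lemma anti_op (X : Type) (R : X -> X -> Prop) (A B : set X) :
  A `<=` B -> lop R B `<=` lop R A.
Proof. by move=> AB x /in_lop H; apply/in_lop => w xw /AB; apply: H. Qed.

Lemma sub_op (X : Type) (R S : X -> X -> Prop) (A : set X) :
  (forall x, S x x) -> upc R A -> A `<=` lop R (lop S A).
Proof.
move=> rf uA x Ax; apply/in_lop => w xw /in_lop H.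
exact: (H w (rf w) (uA _ _ Ax xw)).
Qed.

Section Main.

Lemma main_proof (X : Type) (le1 le2 : X -> X -> Prop) :
  lattice_frame le1 le2 ->
  exists k : X -> canon_point le1 le2,
    injective k /\
    (forall x y, le1 x y -> canon_le1 (k x) (k y)) /\
    (forall x y, le2 x y -> canon_le2 (k x) (k y)).
Proof.
case=> [[[rf1 tr1] [rf2 tr2] anti] _ lf2 lf3].
have ropE : forall A, rop le2 A = lop le2 A by [].
have lop_stable : forall B, upc le2 B -> stable le1 le2 (lop le1 B).
  move=> B uB; rewrite /stable ropE eqEsubset; split.
  - apply: sub_op => //; exact: lop_upc.
  - apply: anti_op; apply: sub_op => //.
have stable_up : forall (S : stable_set le1 le2), upc le1 (carrier S).
  move=> S x y; rewrite (carrierP S) => h xy; exact: lop_upc h xy.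
have meet_stable : forall (S T : stable_set le1 le2),
    stable le1 le2 (carrier S `&` carrier T).
  move=> S T; rewrite /stable ropE eqEsubset; split.
  - apply: sub_op => // x y [h1 h2] xy; split; [exact: stable_up h1 xy|exact: stable_up h2 xy].
  - move=> x h; split.
    + rewrite (carrierP S) ropE; move: x h; apply: anti_op; apply: anti_op; by move=> ? [].
    + rewrite (carrierP T) ropE; move: x h; apply: anti_op; apply: anti_op; by move=> ? [].
have upc_lop2 : forall A, upc le2 (lop le2 A) by move=> A; exact: lop_upc.
have upc_up2 : forall x, upc le2 (up le2 x) by move=> x a b; rewrite /up /=; apply: tr2.
pose mkL (B : set X) (uB : upc le2 B) := StableSet (lop_stable B uB).
have u0 : upc le2 (@set0 X) by move=> a b [].
have uT : upc le2 (@setT X) by [].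
pose Top := mkL set0 u0.
pose Bot := mkL setT uT.
pose P x := mkL _ (upc_lop2 (up le1 x)).
pose Q x := mkL _ (upc_up2 x).
pose Join (Y Z : stable_set le1 le2) := mkL _ (upc_lop2 (carrier Y `|` carrier Z)).
pose Meet (Y Z : stable_set le1 le2) := StableSet (meet_stable Y Z).
have Px : forall x, carrier (P x) x.
  move=> x; apply: sub_op => // a b; rewrite /up /=; exact: tr1.
have PxE : forall x y, carrier (P x) y -> le1 x y.
  move=> x y /in_lop H; apply: NNPP => nxy.
  have [z [yz Hz]] := lf2 _ _ nxy; apply: (H z yz); apply/in_lop => w zw xw.
  exact: (Hz w xw zw).
pose F x : set (stable_set le1 le2) := fun Y => carrier Y x.
pose Iy x : set (stable_set le1 le2) := fun Y => rop le2 (carrier Y) x.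
have QI : forall x, Iy x (Q x).
  move=> x; apply/in_rop => v xv /in_lop H; exact: (H v (rf1 v) xv).
have kP : forall x, maximal_fi_pair (F x) (Iy x).
  move=> x; split; first split.
  - split.
    + by exists Top; apply/in_lop => w _ [].
    + by move=> Y Z h YZ; apply: YZ.
    + by move=> Y Z W h1 h2; rewrite /F => ->.
  - move=> E; have : F x Bot by rewrite E.
    by move/in_lop => H; apply: (H x (rf1 x)).
  - split.
    + by exists Bot; apply/in_rop => v _ /in_lop H; apply: (H v (rf1 v)).
    + by move=> Y Z /in_rop H ZY; apply/in_rop => w xw /ZY; apply: H.
    + move=> Y Z W /in_rop h1 /in_rop h2; rewrite /Iy => ->; rewrite ropE.
      change (lop le2 (lop le1 (lop le2 (carrier Y `|` carrier Z))) x).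
      apply: (@sub_op X le2 le1 (lop le2 (carrier Y `|` carrier Z)) rf1 (lop_upc (A:=carrier Y `|` carrier Z) tr2) x).
      by apply/in_lop => w xw [/h1|/h2]; apply.
  - move=> E; have : Iy x Top by rewrite E.
    by rewrite /Iy; move/in_rop => H; apply: (H x (rf2 x)); apply/in_lop => w _ [].
  - apply/eq0P => Y [h1 /in_rop h2]; exact: (h2 x (rf2 x) h1).
  - move=> F' [_ _ Fm] _ sF dF; rewrite eqEsubset; split=> // Y FY.
    apply: NNPP => nY.
    have : (F' `&` Iy x) (Meet Y (P x)).
      split; first by apply: (Fm Y (P x)) => //; apply: sF; exact: Px.
      apply/in_rop => v xv [Yv /PxE xv1].
      by rewrite (anti _ _ xv1 xv) in nY.
    by rewrite dF.
  - move=> I' [_ _ Ij] _ sI dI; rewrite eqEsubset; split=> // Y IY.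
    apply: NNPP => /in_rop nY.
    have [u [xu Yu]] : exists u, le2 x u /\ carrier Y u.
      apply: NNPP => H; apply: nY => u xu Yu; apply: H; by exists u.
    have : (F x `&` I') (Join Y (Q x)).
      split; last by apply: (Ij Y (Q x)) => //; apply: sI; exact: QI.
      rewrite /F /=; apply/in_lop => s xs /in_lop H.
      case: (classic (le2 x s)) => xs2.
      + rewrite -(anti _ _ xs xs2) in H; exact: (H u xu (or_introl Yu)).
      + have [z [sz Hz]] := lf3 _ _ xs2; apply: (H z sz); right.
        apply/in_lop => w zw xw; exact: (Hz w xw zw).
    by rewrite dI.
exists (fun x => CanonPoint (kP x)); split; last split.
- move=> x y e.
  have h1 := congr1 (@cp1 _ _ _) e; have h2 := congr1 (@cp2 _ _ _) e.
  simpl in h1, h2.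
  have xy1 : le1 x y.
    apply: PxE; have : F x (P x) by exact: Px.
    by rewrite h1.
  have xy2 : le2 x y.
    apply: NNPP => nxy; have [z [yz Hz]] := lf3 _ _ nxy.
    have : Iy y (Q x) by rewrite -h2; exact: QI.
    move/in_rop => H; apply: (H z yz); apply/in_lop => w zw xw; exact: (Hz w xw zw).
  exact: anti.
- move=> x y xy Y /= Yx; exact: stable_up Yx xy.
- move=> x y xy Y /= /in_rop H; apply/in_rop => w yw; apply: H; exact: tr2 yw.
Qed.

End Main.

Theorem mainTheorem1 (X : Type) (le1 le2 : X -> X -> Prop) :
  lattice_frame le1 le2 ->
  exists k : X -> canon_point le1 le2,
    injective k /\
    (forall x y, le1 x y -> canon_le1 (k x) (k y)) /\
    (forall x y, le2 x y -> canon_le2 (k x) (k y)).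
Proof. exact: main_proof. Qed.
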